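(* Let $P$ be a finite lattice and $f\in\mathcal{L}_P$. If $s$ is a minimal element of $\mathcal{S}_f=\{s\in\mathcal{L}_P: f+s=1\}$, then $s$ is prime, i.e. $P\setminus\Phi s$ is closed under $\wedge$.
   Context: $P$ is a finite lattice with greatest element $\hat p$. $\mathcal{L}_P$ is the set of maps $f:P\to P$ satisfying (A.1) $a\le f(a)$; (A.2) $a\le b\Rightarrow f(a)\le f(b)$; (A.3) $f(f(a))=f(a)$, ordered pointwise; it is a lattice with join $+$ and greatest element $1:a\mapsto\hat p$. $\Phi f=\{a:f(a)=a\}$; one has $f+s=1$ iff $\Phi f\cap\Phi s=\{\hat p\}$. A map is prime if its set of non-fixed points is closed under $\wedge$. *)

(* Defs.v *)
From HB Require Import structures.
From mathcomp Require Import all_boot all_order.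
Set Implicit Arguments. Unset Strict Implicit. Unset Printing Implicit Defensive.
Import Order.TTheory.
Local Open Scope order_scope.

(* A finite lattice P: a finite (nonempty) lattice, hence with top \top = \hat p. *)

Definition closure_op {d} {P : finTBLatticeType d} (f : P -> P) : Prop :=
  [/\ forall a : P, a <= f a,
      forall a b : P, a <= b -> f a <= f b
    & forall a : P, f (f a) = f a].

Definition le_op {d} {P : finTBLatticeType d} (f g : P -> P) : Prop :=
  forall a : P, f a <= g a.

Definition one_op {d} {P : finTBLatticeType d} : P -> P := fun _ => \top.

Definition is_join_op {d} {P : finTBLatticeType d} (f s h : P -> P) : Prop :=
  [/\ closure_op h, le_op f h, le_op s h
    & forall g : P -> P, closure_op g -> le_op f g -> le_op s g -> le_op h g].

Definition in_Sf {d} {P : finTBLatticeType d} (f s : P -> P) : Prop :=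
  closure_op s /\ is_join_op f s one_op.

Definition minimal_in_Sf {d} {P : finTBLatticeType d} (f s : P -> P) : Prop :=
  in_Sf f s /\ forall t : P -> P, in_Sf f t -> le_op t s -> forall a, t a = s a.

(* fixed points Phi f, and primality: P \ Phi s closed under meet *)
Definition prime_op {d} {P : finTBLatticeType d} (s : P -> P) : Prop :=
  forall a b : P, s a != a -> s b != b -> s (a `&` b) != a `&` b.

(* Main.v *)
Require Import Defs.
From HB Require Import structures.
From mathcomp Require Import all_boot all_order.
Import Order.TTheory.
Local Open Scope order_scope.
Set Implicit Arguments. Unset Strict Implicit.

Section S.
Variables (d : Order.disp_t) (P : finTBLatticeType d).

Lemma fix_of_le (h g : P -> P) : closure_op h -> closure_op g -> le_op h g ->
  forall a, h (g a) = g a.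
Proof.
move=> [h1 h2 h3] [g1 g2 g3] hg a; apply/le_anti.
by rewrite h1 andbT; apply: le_trans (hg _) _; rewrite g3.
Qed.

Lemma fix_meet (h : P -> P) p q : closure_op h -> h p = p -> h q = q ->
  h (p `&` q) = p `&` q.
Proof.
move=> [h1 h2 h3] hp hq; apply/le_anti; rewrite h1 andbT lexI.
by rewrite -{2}hp -{3}hq !h2 ?leIl ?leIr.
Qed.

Lemma mono_below (h : P -> P) x a : closure_op h -> h x = x -> a <= x -> h a <= x.
Proof. by move=> [_ h2 _] hx ax; rewrite -hx h2. Qed.

Lemma join_fix (f s : P -> P) : closure_op f -> closure_op s -> is_join_op f s one_op ->
  forall x, f x = x -> s x = x -> x = \top.
Proof.
move=> fc sc [_ _ _ J] x fx sx.
pose g := fun a : P => if a <= x then x else \top.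
have gc : closure_op g.
  split.
  - by move=> a; rewrite /g; case: ifP.
  - move=> a b ab; rewrite /g; case bx: (b <= x); first by rewrite (le_trans ab bx).
    by case: ifP.
  - move=> a; rewrite /g; case ax: (a <= x); first by rewrite lexx.
    case: ifP => // tx; apply/le_anti; by rewrite tx lex1.
have fg : le_op f g by move=> a; rewrite /g; case: ifP => ax //; apply: mono_below.
have sg : le_op s g by move=> a; rewrite /g; case: ifP => ax //; apply: mono_below.
have := J g gc fg sg x; rewrite /g /one_op lexx => tx.
by apply/le_anti; rewrite tx lex1.
Qed.

Lemma key (f s : P -> P) : closure_op f -> minimal_in_Sf f s ->
  forall x, s x != x -> exists y, [/\ s y = y, f (x `&` y) = x `&` y & x `&` y != \top].
Proof.
move=> fc [[sc sj] smin] x sx.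
case: (boolP [exists y, [&& s y == y, f (x `&` y) == x `&` y & x `&` y != \top]]).
  by move=> /existsP [y /and3P [/eqP h1 /eqP h2 h3]]; exists y.
move=> /existsPn H; exfalso.
have [s1 s2 s3] := sc.
pose t := fun a : P => if a <= x then x `&` s a else s a.
have tc : closure_op t.
  split.
  - move=> a; rewrite /t; case: ifP => ax; last exact: s1.
    by rewrite lexI ax s1.
  - move=> a b ab; rewrite /t; case bx: (b <= x).
      by rewrite (le_trans ab bx) leI2 // s2.
    case ax: (a <= x); last exact: s2.
    by apply: le_trans (leIr _ _) (s2 _ _ ab).
  - move=> a; rewrite /t; case ax: (a <= x).
      rewrite leIl; congr (_ `&` _); apply/le_anti; apply/andP; split.
        by rewrite -{2}(s3 a) s2 // leIr.
      by rewrite s2 // lexI ax s1.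
    have -> : (s a <= x) = false.
      by apply/negbTE/negP => sax; move/negbT: ax; rewrite (le_trans (s1 a) sax).
    exact: s3.
have ts : le_op t s by move=> a; rewrite /t; case: ifP => // _; apply: leIr.
have tS : in_Sf f t.
  split => //; split => //.
  - by case: sj.
  - by move=> a; apply: lex1.
  - by move=> a; apply: lex1.
  move=> g gc fg tg a; rewrite /one_op.
  have hf := fix_of_le fc gc fg a.
  have ht := fix_of_le tc gc tg a.
  set z := g a in hf ht *.
  move: ht; rewrite /t; case zx: (z <= x) => htz.
  - have e : s (s z) = s z by apply: s3.
    have := H (s z); rewrite e eqxx /= htz hf eqxx /= => /negPn/eqP ->.
    exact: lexx.
  - by rewrite (join_fix fc sc sj hf htz).
have := smin t tS ts x; rewrite /t lexx.
have -> : x `&` s x = x by apply/le_anti; rewrite leIl lexI lexx s1.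
by move=> e; move: sx; rewrite -e eqxx.
Qed.

End S.

Theorem mainTheorem13 (d : Order.disp_t) (P : finTBLatticeType d) (f s : P -> P) :
  closure_op f -> minimal_in_Sf f s -> prime_op s.
Proof.
move=> fc sm a b sa sb; apply/negP => /eqP sab.
have [[sc sj] _] := sm.
have [y [sy fy ty]] := key fc sm sa.
have [z [sz fz tz]] := key fc sm sb.
pose w := (a `&` y) `&` (b `&` z).
have fw : f w = w by apply: fix_meet.
have ew : w = (a `&` b) `&` (y `&` z).
  by rewrite /w !meetA; congr (_ `&` _); rewrite -!meetA; congr (_ `&` _); rewrite meetC.
have sw : s w = w by rewrite ew; apply: fix_meet => //; apply: fix_meet.
have := join_fix fc sc sj fw sw => wt.
move: ty; rewrite eq_le lex1 /=; apply/negP/negPn.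
by rewrite -wt leIl.
Qed.
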